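(* Let $T$ be a tree. The following are equivalent: (i) $T$ is rooted and Dedekind complete; (ii) any two elements of $T$ have a greatest lower bound; (iii) every nonempty subset of $T$ has a greatest lower bound.
   Context: A tree is a partially ordered set in which the set of predecessors of each element is well-ordered. $T$ is rooted if it has exactly one minimal element. For a chain $C$ that is bounded above, its pseudo-supremum is the set of minimal elements of the set of upper bounds of $C$. $T$ is Dedekind complete if the pseudo-supremum of every nonempty chain that is bounded above is a supremum, i.e. consists of a single element (the least upper bound). *)

(* Defs.v *)
From mathcomp Require Import all_boot all_order.
Set Implicit Arguments. Unset Strict Implicit. Unset Printing Implicit Defensive.
Import Order.TTheory.
Local Open Scope order_scope.

Section Trees.
Context {disp : Order.disp_t} {T : porderType disp}.

Definition is_chain (A : T -> Prop) : Prop :=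
  forall a b, A a -> A b -> (a <= b) \/ (b <= a).

Definition well_ordered (A : T -> Prop) : Prop :=
  is_chain A /\
  forall B : T -> Prop, (forall b, B b -> A b) -> (exists b, B b) ->
    exists m, B m /\ forall b, B b -> m <= b.

Definition is_tree : Prop :=
  forall x : T, well_ordered (fun y => y < x).

Definition minimal_elt (x : T) : Prop := forall y : T, ~ (y < x).

Definition rooted : Prop :=
  exists r : T, forall x : T, minimal_elt x <-> x = r.

Definition upper_bound (C : T -> Prop) (x : T) : Prop :=
  forall c, C c -> c <= x.

Definition lower_bound (A : T -> Prop) (x : T) : Prop :=
  forall a, A a -> x <= a.

Definition bounded_above (C : T -> Prop) : Prop := exists x, upper_bound C x.

Definition pseudo_sup (C : T -> Prop) (x : T) : Prop :=
  upper_bound C x /\ forall y, upper_bound C y -> ~ (y < x).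

Definition dedekind_complete : Prop :=
  forall C : T -> Prop, is_chain C -> (exists c, C c) -> bounded_above C ->
    exists s, forall x, pseudo_sup C x <-> x = s.

Definition is_glb (A : T -> Prop) (g : T) : Prop :=
  lower_bound A g /\ forall y, lower_bound A y -> y <= g.

Definition has_glb (A : T -> Prop) : Prop := exists g, is_glb A g.

End Trees.

(* Main.v *)
Require Import Defs.
From mathcomp Require Import all_boot all_order.
From Stdlib Require Import Classical.
Local Open Scope order_scope.
Import Order.TTheory.

Section Aux.
Context {disp : Order.disp_t} {T : porderType disp}.

Lemma le_not_lt_eq (x y : T) : x <= y -> ~ (x < y) -> x = y.
Proof. by rewrite le_eqVlt => /orP [/eqP //|H] /(_ H). Qed.

Lemma least_below (hT : @is_tree disp T) (x : T) (B : T -> Prop) :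
  (forall b, B b -> b <= x) -> (exists b, B b) ->
  exists m, B m /\ forall b, B b -> m <= b.
Proof.
move=> Hx [b0 Hb0].
case: (classic (exists b, B b /\ b < x)) => [[b1 [Hb1 Hlt]]|Hno].
- have [_ W] := hT x.
  have [m [[Bm mlt] Hm]] := W (fun b => B b /\ b < x) (fun b H => proj2 H)
      (ex_intro _ b1 (conj Hb1 Hlt)).
  exists m; split => // b Bb.
  case: (classic (b < x)) => Hbx; first exact: Hm.
  have -> : b = x by apply: le_not_lt_eq => //; exact: Hx.
  exact: ltW.
- have Hall : forall b, B b -> b = x.
    move=> b Bb; apply: le_not_lt_eq; first exact: Hx.
    by move=> H; apply: Hno; exists b.
  exists b0; split => // b Bb; by rewrite (Hall _ Bb) (Hall _ Hb0).
Qed.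

Lemma exists_pseudo_sup (hT : @is_tree disp T) (C : T -> Prop) (u : T) :
  upper_bound C u -> exists m, pseudo_sup C m /\ m <= u.
Proof.
move=> Hu.
have [m [[Um mu] Hm]] := least_below hT u (fun v => upper_bound C v /\ v <= u)
   (fun b H => proj2 H) (ex_intro _ u (conj Hu (lexx u))).
exists m; split => //; split => // y Uy ym.
have := Hm y (conj Uy (ltW (lt_le_trans ym mu))).
by move=> H0; have := lt_le_trans ym H0; rewrite ltxx.
Qed.

End Aux.

Theorem theorem3p1 (disp : Order.disp_t) (T : porderType disp)
  (hT : @is_tree disp T) (hne : inhabited T) :
  ((@rooted disp T /\ @dedekind_complete disp T) <->
     (forall x y : T, has_glb (fun z => z = x \/ z = y))) /\
  ((forall x y : T, has_glb (fun z => z = x \/ z = y)) <->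
     (forall A : T -> Prop, (exists a, A a) -> has_glb A)).
Proof.
split; split.
- move=> [[r Hr] DC] x y.
  have rmin : minimal_elt r by apply/Hr.
  have rle : forall z, r <= z.
    move=> z.
    have [m [mz Hm]] := least_below hT z (fun v => v <= z) (fun b H => H)
        (ex_intro _ z (lexx z)).
    have : minimal_elt m.
      move=> w wm; have := Hm w (ltW (lt_le_trans wm mz)).
      by move=> H0; have := lt_le_trans wm H0; rewrite ltxx.
    by move/Hr => <-.
  pose L := fun z => z <= x /\ z <= y.
  have chL : is_chain L.
    move=> a b [ax _] [bx _].
    case: (classic (a < x)) => Ha; last first.
      have -> : a = x by apply: le_not_lt_eq.
      by right.
    case: (classic (b < x)) => Hb; last first.
      have -> : b = x by apply: le_not_lt_eq.
      by left.
    have [C _] := hT x; exact: C.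
  have [s Hs] := DC L chL (ex_intro _ r (conj (rle x) (rle y)))
     (ex_intro _ x (fun c H => proj1 H)).
  have [mx [Px mxx]] := exists_pseudo_sup hT L _ (fun c H => proj1 H).
  have [my [Py myy]] := exists_pseudo_sup hT L _ (fun c H => proj2 H).
  move/Hs: Px => Ex; move/Hs: Py => Ey.
  subst mx my.
  exists s; split.
    by move=> a [->|->].
  move=> z Hz; have [Us _] := (proj2 (Hs s) erefl).
  apply: Us; split; apply: Hz; by [left|right].
- move=> G; split.
  + case: hne => t0.
    have [m [mz Hm]] := least_below hT t0 (fun v => v <= t0) (fun b H => H)
        (ex_intro _ t0 (lexx t0)).
    have mmin : minimal_elt m.
      move=> w wm; have := Hm w (ltW (lt_le_trans wm mz)).
      by move=> H0; have := lt_le_trans wm H0; rewrite ltxx.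
    exists m => x; split; last by move=> ->.
    move=> xmin.
    have [g [Lg _]] := G x m.
    have gx : g = x by apply: le_not_lt_eq; [apply: Lg; left | apply: xmin].
    have gm : g = m by apply: le_not_lt_eq; [apply: Lg; right | apply: mmin].
    by rewrite -gx gm.
  + move=> C _ [c0 _] [u Hu].
    have [s [Ps _]] := exists_pseudo_sup hT C u Hu.
    exists s => x; split; last by move=> ->.
    move=> Px.
    have [g [Lg Gg]] := G x s.
    have Ug : upper_bound C g.
      move=> c Cc; apply: Gg => a [->|->]; [exact: (proj1 Px) | exact: (proj1 Ps)].
    have gx : g = x by apply: le_not_lt_eq; [apply: Lg; left | apply: (proj2 Px)].
    have gs : g = s by apply: le_not_lt_eq; [apply: Lg; right | apply: (proj2 Ps)].
    by rewrite -gx gs.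
- move=> G A [a Aa].
  have Hb1 : forall g, (exists b, A b /\ is_glb (fun z => z = a \/ z = b) g) -> g <= a.
    by move=> g [b [_ [L _]]]; apply: L; left.
  have Hne : exists g, (exists b, A b /\ is_glb (fun z => z = a \/ z = b) g).
    by have [g Hg] := G a a; exists g, a.
  have [m [[b [Ab Hgb]] Hm]] := least_below hT a _ Hb1 Hne.
  exists m; split.
  + move=> c Ac.
    have [g Hg] := G a c.
    apply: le_trans (Hm g (ex_intro _ c (conj Ac Hg))) _.
    by apply: (proj1 Hg); right.
  + move=> z Hz; apply: (proj2 Hgb) => w [->|->]; exact: Hz.
- move=> H x y; apply: H; exists x; by left.
Qed.
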